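(* Let $d\ge 1$ and let $\mathcal{L}_{\leq d}$ be the set of all lonesum $0$-$1$ matrices (of any size, including the empty $0\times 0$ matrix) with no all-zero row and no all-zero column, in which at most $d$ columns are of the same type and at most $d$ rows are of the same type. For a matrix $M$ let $r(M)$ and $c(M)$ be its numbers of rows and columns, and define the formal power series \[ L_{\leq d}(x,y)=\sum_{M\in\mathcal{L}_{\leq d}}\frac{x^{r(M)}}{r(M)!}\frac{y^{c(M)}}{c(M)!}. \] Then \[ L_{\leq d}(x,y)=\frac{1}{E_d(x)+E_d(y)-E_d(x)E_d(y)},\qquad\text{where } E_d(z)=\sum_{i=0}^{d}\frac{z^i}{i!}. \]
   Context: A $0$-$1$ matrix is lonesum if it is uniquely determined by its row sum vector and column sum vector; equivalently, it contains no $2\times 2$ submatrix equal to $\begin{pmatrix}1&0\\0&1\end{pmatrix}$ or $\begin{pmatrix}0&1\\1&0\end{pmatrix}$. Two rows (resp. columns) are of the same type iff they are identical vectors. *)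

(* Defs.v *)
From mathcomp Require Import all_boot all_order all_algebra.
Set Implicit Arguments. Unset Strict Implicit. Unset Printing Implicit Defensive.
Import GRing.Theory Num.Theory.
Local Open Scope ring_scope.

(* f m n is the coefficient of x^m y^n *)
Definition fps2 := nat -> nat -> rat.

Definition fps2_add (f g : fps2) : fps2 := fun m n => f m n + g m n.
Definition fps2_sub (f g : fps2) : fps2 := fun m n => f m n - g m n.
Definition fps2_mul (f g : fps2) : fps2 := fun m n =>
  \sum_(i < m.+1) \sum_(j < n.+1) f i j * g (m - i)%N (n - j)%N.
Definition fps2_one : fps2 := fun m n => if (m == 0)%N && (n == 0)%N then 1 else 0.

Definition Ed_x (d : nat) : fps2 := fun m n =>
  if (n == 0)%N && (m <= d)%N then (m`!)%:R^-1 else 0.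
Definition Ed_y (d : nat) : fps2 := fun m n =>
  if (m == 0)%N && (n <= d)%N then (n`!)%:R^-1 else 0.

Definition Ed_denom (d : nat) : fps2 :=
  fps2_sub (fps2_add (Ed_x d) (Ed_y d)) (fps2_mul (Ed_x d) (Ed_y d)).

Definition rowsum m n (M : 'M[bool]_(m, n)) (i : 'I_m) : nat :=
  (\sum_(j < n) nat_of_bool (M i j))%N.
Definition colsum m n (M : 'M[bool]_(m, n)) (j : 'I_n) : nat :=
  (\sum_(i < m) nat_of_bool (M i j))%N.

Definition lonesum m n (M : 'M[bool]_(m, n)) : bool :=
  [forall N : 'M[bool]_(m, n),
     ([forall i, rowsum N i == rowsum M i] && [forall j, colsum N j == colsum M j])
     ==> (N == M)].

Definition no_zero_row m n (M : 'M[bool]_(m, n)) : bool :=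
  [forall i, [exists j, M i j]].
Definition no_zero_col m n (M : 'M[bool]_(m, n)) : bool :=
  [forall j, [exists i, M i j]].

Definition rows_of_type_le d m n (M : 'M[bool]_(m, n)) : bool :=
  [forall i, (#|[set i' | row i' M == row i M]| <= d)%N].
Definition cols_of_type_le d m n (M : 'M[bool]_(m, n)) : bool :=
  [forall j, (#|[set j' | col j' M == col j M]| <= d)%N].

Definition in_L d m n (M : 'M[bool]_(m, n)) : bool :=
  [&& lonesum M, no_zero_row M, no_zero_col M,
      rows_of_type_le d M & cols_of_type_le d M].

Definition L_le (d : nat) : fps2 := fun m n =>
  (#|[set M : 'M[bool]_(m, n) | in_L d M]|)%:R / ((m`! * n`!)%N)%:R.

(* Main.v *)
Require Import Defs.
From mathcomp Require Import all_boot all_order all_algebra.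
From mathcomp Require Import perm ring.
Set Implicit Arguments. Unset Strict Implicit. Unset Printing Implicit Defensive.
Import GRing.Theory Num.Theory.
Local Open Scope ring_scope.


Lemma rowsum_lt m n (M : 'M[bool]_(m,n)) i i' j :
  (forall k, M i k -> M i' k) -> ~~ M i j -> M i' j -> (rowsum M i < rowsum M i')%N.
Proof.
move=> sub nij ij; rewrite /rowsum (bigD1 j) //= [X in (_ < X)%N](bigD1 j) //=.
rewrite (negbTE nij) ij add0n add1n ltnS.
apply: leq_sum => k _; case Hk: (M i k) => //; by rewrite (sub k Hk).
Qed.

Lemma switch_contra m n (M : 'M[bool]_(m,n)) i i' j :
  lonesum M -> ~~ M i j -> M i' j -> (rowsum M i' <= rowsum M i)%N -> False.
Proof.
move=> lM nij ij le.
have [j' ij' nij'] : exists2 j', M i j' & ~~ M i' j'.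
  case: (pickP (fun k => M i k && ~~ M i' k)) => [j' /andP[a b] | H]; first by exists j'.
  have : (rowsum M i < rowsum M i')%N.
    apply: (rowsum_lt _ nij ij) => k Hk; move: (H k); rewrite Hk /=; by case: (M i' k).
  by rewrite ltnNge le.
have nii : i != i' by apply/eqP => E; move: nij; rewrite E ij.
have njj : j != j' by apply/eqP => E; move: nij; rewrite E ij'.
pose N : 'M[bool]_(m,n) := \matrix_(a,b) if (a == i) || (a == i') then M a (tperm j j' b) else M a b.
have Hv : forall a b, (b == j) || (b == j') -> N a b = M (tperm i i' a) b.
  move=> a b /orP[]/eqP->; rewrite mxE.
  - have [->|nai] := eqVneq a i; first by rewrite /= tpermL tpermL ij' ij.
    have [->|nai'] := eqVneq a i'; first by rewrite /= ?orbT tpermL tpermR (negbTE nij') (negbTE nij).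
    rewrite /= tpermD //; by rewrite eq_sym.
  - have [->|nai] := eqVneq a i; first by rewrite /= tpermR tpermL (negbTE nij') (negbTE nij).
    have [->|nai'] := eqVneq a i'; first by rewrite /= ?orbT tpermR tpermR ij ij'.
    rewrite /= tpermD //; by rewrite eq_sym.
have Hw : forall a b, ~~ ((b == j) || (b == j')) -> N a b = M a b.
  move=> a b; rewrite negb_or => /andP[bj bj']; rewrite mxE tpermD 1?eq_sym //; by case: ifP.
move/forallP: lM => /(_ N) /implyP H.
have : N == M.
  apply: H; apply/andP; split; apply/forallP => x; apply/eqP.
  - rewrite /rowsum; case: (boolP ((x == i) || (x == i'))) => c; last first.
      by under eq_bigr do rewrite mxE (negbTE c) /=.
    under eq_bigr do rewrite mxE c /=.
    by rewrite [RHS](reindex_inj (h:=tperm j j') (@perm_inj _ _)).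
  - rewrite /colsum; case: (boolP ((x == j) || (x == j'))) => Hx.
      under eq_bigr do rewrite Hv //.
      by rewrite [RHS](reindex_inj (h:=tperm i i') (@perm_inj _ _)).
    by under eq_bigr do rewrite Hw //.
move/eqP/matrixP => /(_ i j); rewrite Hv ?eqxx // tpermL.
by move=> E; move: nij; rewrite -E ij.
Qed.


Definition allones m n (M : 'M[bool]_(m,n)) : {set 'I_m} := [set i | [forall j, M i j]].
Definition Bset m n (M : 'M[bool]_(m,n)) : {set 'I_n} :=
  [set j | [forall i, M i j == (i \in allones M)]].

Lemma inL_dims d m n (M : 'M[bool]_(m,n)) :
  in_L d M -> (0 < m)%N || (0 < n)%N -> (0 < m)%N && (0 < n)%N.
Proof.
move/and5P=> [_ zr zc _ _] /orP[] H.
- move/forallP: zr => /(_ (Ordinal H)) /existsP [j _].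
  by rewrite H /=; exact: (leq_ltn_trans (leq0n j) (ltn_ord j)).
- move/forallP: zc => /(_ (Ordinal H)) /existsP [i _].
  by rewrite H andbT; exact: (leq_ltn_trans (leq0n i) (ltn_ord i)).
Qed.

Lemma allones_n0 d m n (M : 'M[bool]_(m,n)) :
  in_L d M -> (0 < m)%N -> exists i, i \in allones M.
Proof.
move/and5P=> [lM zr zc _ _] m0.
pose i0 := Ordinal m0.
set i := [arg max_(i > i0) rowsum M i].
exists i; rewrite inE; apply/forallP => j.
case: (boolP (M i j)) => // nij.
move/forallP: zc => /(_ j) /existsP [i' ij].
exfalso; apply: (switch_contra lM nij ij).
rewrite /i; case: arg_maxnP => //= k _ H; exact: H.
Qed.

Lemma Bset_n0 d m n (M : 'M[bool]_(m,n)) :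
  in_L d M -> (0 < n)%N -> exists j, j \in Bset M.
Proof.
move=> LM n0; move/and5P: (LM) => [lM zr zc _ _].
case: (pickP (fun i => i \notin allones M)) => [i0 i0n | allA].
- set i1 := [arg max_(i > i0 | i \notin allones M) rowsum M i].
  have [Hi1 Hmax] : i1 \notin allones M /\
     forall i, i \notin allones M -> (rowsum M i <= rowsum M i1)%N.
    by rewrite /i1; case: arg_maxnP => //= k Pk H; split.
  move: (Hi1); rewrite inE negb_forall => /existsP [j nj].
  exists j; rewrite inE; apply/forallP => i.
  case: (boolP (i \in allones M)) => iA.
    by move: (iA); rewrite inE => /forallP /(_ j) ->.
  case: (boolP (M i j)) => // ij; exfalso.
  exact: (switch_contra lM nj ij (Hmax i iA)).
- exists (Ordinal n0); rewrite inE; apply/forallP => i.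
  have iA := negbFE (allA i).
  by rewrite iA; move: iA; rewrite inE => /forallP /(_ (Ordinal n0)) ->.
Qed.

Lemma allones_le d m n (M : 'M[bool]_(m,n)) :
  in_L d M -> (0 < m)%N -> (#|allones M| <= d)%N.
Proof.
move=> LM m0; have [i iA] := allones_n0 LM m0.
move/and5P: LM => [_ _ _ /forallP /(_ i) rt _].
apply: leq_trans rt; apply: subset_leq_card; apply/subsetP => k kA.
rewrite inE; apply/eqP/rowP => j; rewrite !mxE.
by move: kA iA; rewrite !inE => /forallP/(_ j) -> /forallP/(_ j) ->.
Qed.

Lemma Bset_le d m n (M : 'M[bool]_(m,n)) :
  in_L d M -> (0 < n)%N -> (#|Bset M| <= d)%N.
Proof.
move=> LM n0; have [j jB] := Bset_n0 LM n0.
move/and5P: LM => [_ _ _ _ /forallP /(_ j) ct].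
apply: leq_trans ct; apply: subset_leq_card; apply/subsetP => k kB.
rewrite inE; apply/eqP/colP => i; rewrite !mxE.
by move: kB jB; rewrite !inE => /forallP/(_ i)/eqP -> /forallP/(_ i)/eqP ->.
Qed.


Definition res m n (A : {set 'I_m}) (B : {set 'I_n}) (M : 'M[bool]_(m,n))
  : 'M[bool]_(#|~:A|, #|~:B|) := \matrix_(r, c) M (enum_val r) (enum_val c).

Definition ext m n (A : {set 'I_m}) (B : {set 'I_n}) (X : 'M[bool]_(#|~:A|, #|~:B|))
  : 'M[bool]_(m,n) :=
  \matrix_(i, j) ((i \in A) || ((j \notin B) &&
     [exists r, exists c, [&& enum_val r == i, enum_val c == j & X r c]])).

Arguments ext {m n} A B X.
Arguments res {m n} A B M.

Lemma ev_notin m (A : {set 'I_m}) (r : 'I_#|~:A|) : enum_val r \notin A.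
Proof. by move: (enum_valP r); rewrite inE. Qed.

Lemma ev_surj m (A : {set 'I_m}) i : i \notin A -> exists r : 'I_#|~:A|, enum_val r = i.
Proof.
move=> iA; have iA' : i \in ~:A by rewrite inE.
by exists (enum_rank_in iA' i); rewrite enum_rankK_in.
Qed.

Lemma ext_ev m n (A : {set 'I_m}) (B : {set 'I_n}) X r c :
  ext A B X (enum_val r) (enum_val c) = X r c.
Proof.
rewrite mxE (negbTE (ev_notin r)) (ev_notin c) /=.
apply/existsP/idP => [[r' /existsP [c' /and3P [/eqP/enum_val_inj E1 /eqP/enum_val_inj E2 H]]]|H].
  by rewrite -E1 -E2.
by exists r; apply/existsP; exists c; rewrite !eqxx.
Qed.

Lemma ext_A m n (A : {set 'I_m}) (B : {set 'I_n}) X i j : i \in A -> ext A B X i j.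
Proof. by move=> iA; rewrite mxE iA. Qed.

Lemma ext_B m n (A : {set 'I_m}) (B : {set 'I_n}) X i j :
  i \notin A -> j \in B -> ext A B X i j = false.
Proof. by move=> iA jB; rewrite mxE (negbTE iA) jB. Qed.

Lemma res_ext m n (A : {set 'I_m}) (B : {set 'I_n}) X : res A B (ext A B X) = X.
Proof. by apply/matrixP => r c; rewrite mxE ext_ev. Qed.

Definition shp m n (A : {set 'I_m}) (B : {set 'I_n}) (M : 'M[bool]_(m,n)) :=
  (forall i j, i \in A -> M i j) /\ (forall i j, i \notin A -> j \in B -> M i j = false).

Arguments shp {m n} A B M.

Lemma shp_ext m n (A : {set 'I_m}) (B : {set 'I_n}) X : shp A B (ext A B X).
Proof. by split => i j; [apply: ext_A | apply: ext_B]. Qed.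

Lemma ext_res m n (A : {set 'I_m}) (B : {set 'I_n}) M :
  shp A B M -> ext A B (res A B M) = M.
Proof.
move=> [H1 H2]; apply/matrixP => i j.
case: (boolP (i \in A)) => iA; first by rewrite ext_A // H1.
case: (boolP (j \in B)) => jB; first by rewrite ext_B // H2.
have [r <-] := ev_surj iA; have [c <-] := ev_surj jB.
by rewrite ext_ev mxE.
Qed.

Lemma sum_split n (B : {set 'I_n}) (F : 'I_n -> nat) :
  (\sum_j F j = \sum_(j in B) F j + \sum_(c < #|~:B|) F (enum_val c))%N.
Proof.
rewrite (bigID (fun j => j \in B)) /=; congr (_ + _)%N.
rewrite -big_enum_val /=; apply: eq_bigl => j; by rewrite inE.
Qed.

Lemma rowsum_res m n (A : {set 'I_m}) (B : {set 'I_n}) M r :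
  shp A B M -> rowsum M (enum_val r) = rowsum (res A B M) r.
Proof.
move=> [_ H2]; rewrite /rowsum (sum_split B) big1 ?add0n.
  by apply: eq_bigr => c _; rewrite mxE.
by move=> j jB; rewrite H2 // ev_notin.
Qed.

Lemma colsum_res m n (A : {set 'I_m}) (B : {set 'I_n}) M c :
  colsum M (enum_val c) = (\sum_(i in A) M i (enum_val c) + colsum (res A B M) c)%N.
Proof.
rewrite /colsum (sum_split A); congr (_ + _)%N.
by apply: eq_bigr => r _; rewrite mxE.
Qed.

Arguments colsum_res {m n} A B M c.
Arguments rowsum_res {m n A B M} r.
Arguments shp_ext {m n} A B X.
Arguments res_ext {m n} A B X.


Definition samesums m n (M N : 'M[bool]_(m,n)) :=
  [forall i, rowsum N i == rowsum M i] && [forall j, colsum N j == colsum M j].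

Lemma sum_lt n (f g : 'I_n -> bool) j :
  (forall k, f k -> g k) -> ~~ f j -> g j ->
  (\sum_k nat_of_bool (f k) < \sum_k nat_of_bool (g k))%N.
Proof.
move=> sub nij ij; rewrite (bigD1 j) //= [X in (_ < X)%N](bigD1 j) //=.
rewrite (negbTE nij) ij add0n add1n ltnS.
apply: leq_sum => k _; case Hk: (f k) => //; by rewrite (sub k Hk).
Qed.

Lemma ss_res m n (A : {set 'I_m}) (B : {set 'I_n}) M N :
  shp A B M -> shp A B N -> samesums M N = samesums (res A B M) (res A B N).
Proof.
move=> sM sN; have [M1 M2] := sM; have [N1 N2] := sN.
have EA : forall c : 'I_#|~:B|, (\sum_(i in A) N i (enum_val c) = \sum_(i in A) M i (enum_val c))%N.
  by move=> c; apply: eq_bigr => i iA; rewrite M1 // N1.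
apply/idP/idP => /andP [/forallP R /forallP C]; apply/andP; split; apply/forallP.
- by move=> r; rewrite -(rowsum_res r sM) -(rowsum_res r sN).
- move=> c; move: (C (enum_val c)); rewrite !(colsum_res A B) EA.
  by rewrite eqn_add2l.
- move=> i; case: (boolP (i \in A)) => iA.
    by apply/eqP/eq_bigr => j _; rewrite M1 // N1.
  have [r <-] := ev_surj iA; by rewrite (rowsum_res r sM) (rowsum_res r sN).
- move=> j; case: (boolP (j \in B)) => jB.
    apply/eqP/eq_bigr => i _; case: (boolP (i \in A)) => iA.
      by rewrite M1 // N1.
    by rewrite M2 // N2.
  have [c <-] := ev_surj jB; by rewrite !(colsum_res A B) EA eqn_add2l.
Qed.

Lemma shp_ss m n (A : {set 'I_m}) (B : {set 'I_n}) M N :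
  shp A B M -> samesums M N -> shp A B N.
Proof.
move=> [M1 M2] /andP [/forallP R /forallP C].
have N1 : forall i j, i \in A -> N i j.
  move=> i j iA; apply/negP => /negP nj.
  have := sum_lt (f := N i) (g := M i) (j := j) (fun k _ => M1 i k iA) nj (M1 i j iA).
  by move: (R i) => /eqP; rewrite /rowsum => ->; rewrite ltnn.
split => // i j iA jB; apply/negP => ij.
have : (colsum M j < colsum N j)%N.
  apply: (sum_lt (j := i)) => [k||].
  - case: (boolP (k \in A)) => kA; first by rewrite N1.
    by rewrite M2.
  - by rewrite M2.
  - by [].
by move: (C j) => /eqP ->; rewrite ltnn.
Qed.

Lemma lonesum_res m n (A : {set 'I_m}) (B : {set 'I_n}) M :
  shp A B M -> lonesum M = lonesum (res A B M).
Proof.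
move=> sM; apply/idP/idP => /forallP L; apply/forallP => N; apply/implyP => ss.
- have sN := shp_ext A B N.
  have : samesums M (ext A B N) by rewrite (ss_res sM sN) res_ext.
  move/(implyP (L (ext A B N)))/eqP => E.
  by rewrite -(res_ext A B N) E.
- have sN := shp_ss sM ss.
  have ss1 : samesums M N := ss.
  move: ss1; rewrite (ss_res sM sN) => ss'.
  move/implyP: (L (res A B N)) => /(_ ss')/eqP E.
  by rewrite -(ext_res sN) E ext_res.
Qed.


Lemma rows_res d m n (A : {set 'I_m}) (B : {set 'I_n}) M :
  shp A B M -> rows_of_type_le d M -> rows_of_type_le d (res A B M).
Proof.
move=> [M1 M2] /forallP RT; apply/forallP => r.
apply: leq_trans (RT (enum_val r)).
rewrite -(card_imset _ (@enum_val_inj _ _)); apply: subset_leq_card.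
apply/subsetP => i /imsetP [r'].
rewrite inE => /eqP E ->; rewrite inE; apply/eqP/rowP => j; rewrite !mxE.
case: (boolP (j \in B)) => jB; first by rewrite !M2 // ev_notin.
have [c <-] := ev_surj jB.
by move/rowP: E => /(_ c); rewrite !mxE.
Qed.

Lemma cols_res d m n (A : {set 'I_m}) (B : {set 'I_n}) M :
  shp A B M -> cols_of_type_le d M -> cols_of_type_le d (res A B M).
Proof.
move=> [M1 M2] /forallP RT; apply/forallP => c.
apply: leq_trans (RT (enum_val c)).
rewrite -(card_imset _ (@enum_val_inj _ _)); apply: subset_leq_card.
apply/subsetP => j /imsetP [c'].
rewrite inE => /eqP E ->; rewrite inE; apply/eqP/colP => i; rewrite !mxE.
case: (boolP (i \in A)) => iA; first by rewrite !M1.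
have [r <-] := ev_surj iA.
by move/colP: E => /(_ r); rewrite !mxE.
Qed.

Lemma S_shp m n (M : 'M[bool]_(m,n)) : shp (allones M) (Bset M) M.
Proof.
split => i j.
  by rewrite inE => /forallP.
move=> iA; rewrite inE => /forallP /(_ i) /eqP ->; exact: negbTE.
Qed.

Lemma res_inL d m n (M : 'M[bool]_(m,n)) :
  in_L d M -> in_L d (res (allones M) (Bset M) M).
Proof.
have sM := S_shp M.
move/and5P => [lM zr zc rt ct]; apply/and5P; split.
- by rewrite -lonesum_res.
- apply/forallP => r; move/forallP: zr => /(_ (enum_val r)) /existsP [j Mj].
  case: (boolP (j \in Bset M)) => jB.
    by move: Mj; rewrite sM.2 // ev_notin.
  have [c Ec] := ev_surj jB; apply/existsP; exists c; by rewrite mxE Ec.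
- apply/forallP => c; have := ev_notin c; rewrite inE negb_forall => /existsP [i].
  case: (boolP (i \in allones M)) => iA; first by rewrite sM.1.
  case Mi: (M i (enum_val c)) => // _.
  have [r Er] := ev_surj iA; apply/existsP; exists r; by rewrite mxE Er.
- exact: rows_res.
- exact: cols_res.
Qed.


Lemma rowij m n (M : 'M[bool]_(m,n)) i j : row i M 0 j = M i j.
Proof. by rewrite mxE. Qed.
Lemma colij m n (M : 'M[bool]_(m,n)) i j : col j M i 0 = M i j.
Proof. by rewrite mxE. Qed.

Lemma allones_ext m n (A : {set 'I_m}) (B : {set 'I_n}) X j0 :
  j0 \in B -> allones (ext A B X) = A.
Proof.
move=> j0B; apply/setP => i; rewrite inE.
case: (boolP (i \in A)) => iA.
  by apply/forallP => j; rewrite ext_A.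
by apply/forallP => /(_ j0); rewrite ext_B.
Qed.

Lemma Bset_ext d m n (A : {set 'I_m}) (B : {set 'I_n}) X j0 :
  in_L d X -> j0 \in B -> Bset (ext A B X) = B.
Proof.
move=> /and5P [_ _ zc _ _] j0B; apply/setP => j; rewrite inE (allones_ext _ j0B).
case: (boolP (j \in B)) => jB.
  apply/forallP => i; case: (boolP (i \in A)) => iA.
    by rewrite ext_A.
  by rewrite ext_B.
apply/negbTE; rewrite negb_forall.
have [c <-] := ev_surj jB.
move/forallP: zc => /(_ c) /existsP [r Xr].
apply/existsP; exists (enum_val r); by rewrite ext_ev Xr ev_notin.
Qed.

Lemma ext_inL d m n (A : {set 'I_m}) (B : {set 'I_n}) X i0 j0 :
  in_L d X -> i0 \in A -> j0 \in B -> (#|A| <= d)%N -> (#|B| <= d)%N ->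
  in_L d (ext A B X).
Proof.
move=> LX i0A j0B Ad Bd.
have sM := shp_ext A B X.
move/and5P: (LX) => [lX zr zc rt ct]; apply/and5P; split.
- by rewrite (lonesum_res sM) res_ext.
- apply/forallP => i; case: (boolP (i \in A)) => iA.
    by apply/existsP; exists j0; rewrite ext_A.
  have [r <-] := ev_surj iA.
  move/forallP: zr => /(_ r) /existsP [c Xc].
  by apply/existsP; exists (enum_val c); rewrite ext_ev.
- by apply/forallP => j; apply/existsP; exists i0; rewrite ext_A.
- apply/forallP => i; case: (boolP (i \in A)) => iA.
    apply: leq_trans Ad; apply: subset_leq_card; apply/subsetP => i'.
    rewrite inE => /eqP/rowP/(_ j0); rewrite ?rowij ?colij => E.
    apply/negPn/negP => i'A; move: E; by rewrite (ext_A X j0 iA) (ext_B X i'A j0B).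
  have [r Er] := ev_surj iA.
  move/forallP: rt => /(_ r) rt; apply: leq_trans rt.
  apply: leq_trans (leq_imset_card enum_val _); apply: subset_leq_card.
  apply/subsetP => i'; rewrite inE => /eqP/rowP E.
  have i'A : i' \notin A.
    apply/negP => i'A; move: (E j0); by rewrite ?rowij ?colij (ext_A X j0 i'A) (ext_B X iA j0B).
  have [r' Er'] := ev_surj i'A.
  apply/imsetP; exists r' => //; rewrite inE; apply/eqP/rowP => c.
  by move: (E (enum_val c)); rewrite ?rowij ?colij -Er -Er' !ext_ev.
- apply/forallP => j; case: (boolP (j \in B)) => jB.
    apply: leq_trans Bd; apply: subset_leq_card; apply/subsetP => j'.
    rewrite inE => /eqP/colP E.
    apply/negPn/negP => j'B.
    have [c Ec] := ev_surj j'B.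
    move/forallP: zc => /(_ c) /existsP [r Xr].
    move: (E (enum_val r)); by rewrite ?rowij ?colij -Ec ext_ev Xr (ext_B X (ev_notin r) jB).
  have [c Ec] := ev_surj jB.
  move/forallP: ct => /(_ c) ct; apply: leq_trans ct.
  apply: leq_trans (leq_imset_card enum_val _); apply: subset_leq_card.
  apply/subsetP => j'; rewrite inE => /eqP/colP E.
  have j'B : j' \notin B.
    apply/negP => j'B.
    move/forallP: zc => /(_ c) /existsP [r Xr].
    move: (E (enum_val r)); by rewrite ?rowij ?colij -Ec ext_ev Xr (ext_B X (ev_notin r) j'B).
  have [c' Ec'] := ev_surj j'B.
  apply/imsetP; exists c' => //; rewrite inE; apply/eqP/colP => r.
  by move: (E (enum_val r)); rewrite ?rowij ?colij -Ec -Ec' !ext_ev.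
Qed.

Local Close Scope ring_scope.

Definition cnt d m n := #|[set M : 'M[bool]_(m,n) | in_L d M]|.

Lemma S_card d m n (A : {set 'I_m}) (B : {set 'I_n}) :
  (0 < m) || (0 < n) ->
  #|[set M : 'M[bool]_(m,n) | [&& in_L d M, allones M == A & Bset M == B]]| =
  if [&& 0 < #|A|, #|A| <= d, 0 < #|B| & #|B| <= d] then cnt d #|~:A| #|~:B| else 0.
Proof.
move=> mn; case: ifP => cond; last first.
  apply/eqP; rewrite cards_eq0; apply/eqP/setP => M; rewrite !inE.
  apply/negbTE/negP => /and3P [LM /eqP EA /eqP EB].
  have /andP [m0 n0] := inL_dims LM mn.
  have [i iA] := allones_n0 LM m0; have [j jB] := Bset_n0 LM n0.
  move: cond; rewrite -EA -EB (allones_le LM m0) (Bset_le LM n0) !andbT !andTb !card_gt0.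
  move=> /negbT/negP; apply.
  by apply/andP; split; apply/set0Pn; [exists i | exists j].
move/and4P: cond => [A0 Ad B0 Bd].
move: A0 B0; rewrite !card_gt0 => /set0Pn [i0 i0A] /set0Pn [j0 j0B].
apply/eqP; rewrite eqn_leq; apply/andP; split.
- rewrite -(card_in_imset (f := res A B)).
    apply: subset_leq_card; apply/subsetP => X /imsetP [M].
    rewrite inE => /and3P [LM /eqP EA /eqP EB] ->; rewrite inE.
    by rewrite -EA -EB; apply: res_inL.
  move=> M1 M2; rewrite !inE => /and3P [_ /eqP E1A /eqP E1B] /and3P [_ /eqP E2A /eqP E2B] E.
  have s1 := S_shp M1; have s2 := S_shp M2.
  rewrite E1A E1B in s1; rewrite E2A E2B in s2.
  by rewrite -(ext_res s1) -(ext_res s2) E.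
- rewrite /cnt -(card_imset _ (can_inj (res_ext A B))).
  apply: subset_leq_card; apply/subsetP => M /imsetP [X LX ->]; rewrite inE in LX.
  rewrite inE (ext_inL LX i0A j0B Ad Bd) (allones_ext X j0B) (Bset_ext LX j0B).
  by rewrite !eqxx.
Qed.

Lemma cnt_sets d m n : (0 < m) || (0 < n) ->
  cnt d m n = \sum_(A : {set 'I_m}) \sum_(B : {set 'I_n})
    (if [&& 0 < #|A|, #|A| <= d, 0 < #|B| & #|B| <= d] then cnt d #|~:A| #|~:B| else 0).
Proof.
move=> mn.
rewrite /cnt -sum1_card (partition_big (fun M => (allones M, Bset M)) xpredT) //= pair_big /=.
apply: eq_big => // [[A B]] _ /=; rewrite -S_card // -sum1_card; apply: eq_bigl => M.
by rewrite !inE xpair_eqE.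
Qed.

Lemma sumC m (F : nat -> nat) :
  \sum_(A : {set 'I_m}) F #|~:A| = \sum_(i < m.+1) 'C(m, i) * F i.
Proof.
rewrite (reindex_inj (@setC_inj _)) /=.
under eq_bigr do rewrite setCK.
rewrite (partition_big (fun A : {set 'I_m} => (inord #|A| : 'I_m.+1)) xpredT) //=.
apply: eq_bigr => i _.
have cA : forall A : {set 'I_m}, #|A| < m.+1.
  by move=> A; rewrite ltnS; have := max_card A; rewrite card_ord.
transitivity (\sum_(A in [set A : {set 'I_m} | #|A| == i]) F i).
  apply: eq_big => [A|A]; rewrite ?inE -val_eqE /= inordK //.
  by move/eqP ->.
by rewrite sum_nat_const card_draws card_ord.
Qed.

Definition Hf d m n c c' :=
  if [&& 0 < m - c, m - c <= d, 0 < n - c' & n - c' <= d] then cnt d c c' else 0.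

Lemma cardA m (A : {set 'I_m}) : #|A| = m - #|~:A|.
Proof. have := cardsC A; rewrite card_ord; move: #|A| #|~:A| => a b E; by rewrite -E addnK. Qed.

Lemma cnt_rec d m n : (0 < m) || (0 < n) ->
  cnt d m n = \sum_(i < m.+1) \sum_(j < n.+1) 'C(m, i) * ('C(n, j) * Hf d m n i j).
Proof.
move=> mn; rewrite cnt_sets //.
transitivity (\sum_(A : {set 'I_m}) \sum_(B : {set 'I_n}) Hf d m n #|~:A| #|~:B|).
  by apply: eq_bigr => A _; apply: eq_bigr => B _; rewrite /Hf -!cardA.
transitivity (\sum_(A : {set 'I_m}) \sum_(j < n.+1) 'C(n, j) * Hf d m n #|~:A| j).
  by apply: eq_bigr => A _; rewrite (@sumC _ (fun c => Hf d m n #|~:A| c)).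
rewrite (@sumC _ (fun c => \sum_(j < n.+1) 'C(n, j) * Hf d m n c j)).
by apply: eq_bigr => i _; rewrite big_distrr.
Qed.

Local Open Scope ring_scope.

Lemma ExEy d a b : fps2_mul (Ed_x d) (Ed_y d) a b =
  (if (a <= d)%N then (a`!)%:R^-1 else 0) * (if (b <= d)%N then (b`!)%:R^-1 else 0).
Proof.
rewrite /fps2_mul big_ord_recr /= big1 ?add0r => [|i _]; last first.
  apply: big1 => j _; rewrite /Ed_y.
  have : (0 < a - i)%N by rewrite subn_gt0.
  by case: (a - i)%N => //= k _; rewrite mulr0.
rewrite big_ord_recl /= big1 ?addr0 => [|j _]; last by rewrite /Ed_x /= mul0r.
by rewrite /Ed_x /Ed_y /= subnn subn0 eqxx /=.
Qed.

Definition K d a b : rat :=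
  if [&& (0 < a)%N, (a <= d)%N, (0 < b)%N & (b <= d)%N] then (a`!)%:R^-1 * (b`!)%:R^-1 else 0.

Lemma D_val d a b : Ed_denom d a b =
  (if (a == 0)%N && (b == 0)%N then 1 else 0) - K d a b.
Proof.
rewrite /Ed_denom /fps2_sub /fps2_add ExEy /K /Ed_x /Ed_y.
case: a => [|a]; case: b => [|b]; rewrite /= ?fact0 ?invr1 ?andbF ?andbT;
  repeat (case: ifP => _); rewrite /=; ring.
Qed.

Lemma sum_delta (F : nat -> nat -> rat) m n :
  \sum_(i < m.+1) \sum_(j < n.+1) F i j * (if (m - i == 0)%N && (n - j == 0)%N then 1 else 0)
  = F m n.
Proof.
rewrite big_ord_recr /= big1 ?add0r => [|i _]; last first.
  apply: big1 => j _.
  have : (0 < m - i)%N by rewrite subn_gt0.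
  by rewrite lt0n => /negbTE ->; rewrite mulr0.
rewrite big_ord_recr /= big1 ?add0r => [|j _]; last first.
  have : (0 < n - j)%N by rewrite subn_gt0.
  by rewrite lt0n => /negbTE ->; rewrite andbF mulr0.
by rewrite !subnn /= mulr1.
Qed.

Lemma L_rec d m n : (0 < m)%N || (0 < n)%N ->
  L_le d m n = \sum_(i < m.+1) \sum_(j < n.+1) L_le d i j * K d (m - i) (n - j).
Proof.
move=> mn; rewrite /L_le.
have -> : #|[set M : 'M[bool]_(m,n) | in_L d M]| = cnt d m n by [].
rewrite cnt_rec // natr_sum mulr_suml; apply: eq_bigr => i _.
rewrite natr_sum mulr_suml; apply: eq_bigr => j _.
have -> : #|[set M : 'M[bool]_(i,j) | in_L d M]| = cnt d i j by [].
rewrite /Hf /K; case: ifP => _; last by rewrite !muln0 mul0r mulr0.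
have im : (i <= m)%N by rewrite -ltnS ltn_ord.
have jn : (j <= n)%N by rewrite -ltnS ltn_ord.
have Em := bin_fact im; have En := bin_fact jn.
rewrite -Em -En !natrM.
have h1 : ('C(m, i))%:R != 0 :> rat by rewrite pnatr_eq0 -lt0n bin_gt0.
have h2 : ('C(n, j))%:R != 0 :> rat by rewrite pnatr_eq0 -lt0n bin_gt0.
have f1 : forall k, (k`!)%:R != 0 :> rat by move=> k; rewrite pnatr_eq0 -lt0n fact_gt0.
field.
by rewrite h1 h2 !f1.
Qed.

Theorem theorem3 (d : nat) : (1 <= d)%N ->
  forall m n : nat, fps2_mul (L_le d) (Ed_denom d) m n = fps2_one m n.
Proof.
move=> _ m n.
rewrite /fps2_mul.
under eq_bigr do under eq_bigr do rewrite D_val mulrBr.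
under eq_bigr do rewrite sumrB.
rewrite sumrB sum_delta /fps2_one.
case: (boolP ((0 < m)%N || (0 < n)%N)) => mn.
  rewrite -L_rec // subrr.
  by move: mn; case: m => [|m]; case: n => [|n].
move: mn; case: m => [|m]; case: n => [|n] // _ /=.
rewrite !big_ord1 /K /= mulr0 subr0 /L_le.
have -> : [set M : 'M[bool]_(0,0) | in_L d M] = [set const_mx false].
  apply/setP => M; rewrite !inE.
  have -> : M == const_mx false by apply/eqP/matrixP => [[]].
  apply/and5P; split; try by apply/forallP => [[]].
  by apply/forallP => N; apply/implyP => _; apply/eqP/matrixP => [[]].
by rewrite cards1 divr1.
Qed.
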